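(* Let $\mathbf{M}$ be the $5\times4$ matrix of operators on $\ell_{2+}$ $$\mathbf{M}=\begin{bmatrix}-\mathbf{1}&\mathbf{0}&\mathbf{0}&\mathbf{0}\\ \tfrac{1}{\sqrt2}\mathfrak{q}^*&-\mathbf{1}&\mathbf{0}&\mathbf{0}\\ \mathbf{0}&\tfrac{1}{\sqrt2}\mathfrak{q}^*&\tfrac{1}{\sqrt2}\mathfrak{q}^*&\mathbf{0}\\ \mathbf{0}&\mathbf{0}&-\mathbf{1}&\tfrac{1}{\sqrt2}\mathfrak{q}^*\\ \mathbf{0}&\mathbf{0}&\mathbf{0}&-\mathbf{1}\end{bmatrix},$$ and let $\mathbf{P}$ be any $4\times4$ permutation matrix. Then there does not exist an invertible $4\times4$ matrix of operators $\mathbf{L}$ with entries in $\mathbb{R}[\mathfrak{q}]$ such that both of the following hold: 1) $\mathbf{L}\mathbf{L}^*=(\mathbf{M}\mathbf{P})^*\mathbf{M}\mathbf{P}$; 2) $\mathbf{L}$ is lower triangular and satisfies $[(\mathbf{M}\mathbf{P})^*\mathbf{M}\mathbf{P}]_{ij}=\mathbf{0}\implies\mathbf{L}_{ij}=\mathbf{0}$ for all $i,j$.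
   Context: $\ell_{2+}$ is the Hilbert space of square-summable real sequences $(y[0],y[1],\ldots)$; matrices of operators act on $\ell_{2+}^n$ in the usual way and $^*$ denotes the adjoint. The forward shift is $\mathfrak{q}:(y[0],y[1],\ldots)\mapsto(y[1],y[2],\ldots)$, with adjoint $\mathfrak{q}^*:(y[0],y[1],\ldots)\mapsto(0,y[0],y[1],\ldots)$. $\mathbf{1}$ is the identity and $\mathbf{0}$ the zero operator; real scalars act by scaling. $\mathbb{R}[\mathfrak{q}]=\{\sum_{j=0}^{N-1}\alpha_j\mathfrak{q}^j : N\in\mathbb{N},\ \alpha_j\in\mathbb{R}\}$ (the operators whose adjoints are polynomials in $\mathfrak{q}^*$). A permutation matrix of operators has exactly one nonzero entry in each row and column, and that entry equals $\mathbf{1}$. *)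

(* Defs.v *)
From HB Require Import structures.
From mathcomp Require Import all_boot all_order all_algebra all_fingroup.
From mathcomp Require Import all_classical all_reals.
From mathcomp Require Import topology normedtype sequences Rstruct Rstruct_topology.
Set Implicit Arguments. Unset Strict Implicit. Unset Printing Implicit Defensive.
Import Order.TTheory GRing.Theory Num.Theory.
Local Open Scope ring_scope.

Notation R := Rdefinitions.R.

Definition rseq := nat -> R.

Definition l2 (y : rseq) : Prop := cvgn (series (fun n => y n ^+ 2)).

(* operators, acting on sequences; they are compared on l_{2+} only *)
Definition Op := rseq -> rseq.
Definition op0 : Op := fun _ _ => 0.
Definition op1 : Op := fun y => y.

(* p(q) = sum_k p_k q^k, with q the forward shift: (q^k y)[t] = y[t+k] *)
Definition polyq (p : {poly R}) : Op :=
  fun y t => \sum_(k < size p) p`_k * y (t + k)%N.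
(* p(q^* ) = sum_k p_k (q^* )^k = adjoint of p(q): ((q^* )^k y)[t] = y[t-k] if k<=t else 0 *)
Definition polyqs (p : {poly R}) : Op :=
  fun y t => \sum_(k < size p) p`_k * (if (k <= t)%N then y (t - k)%N else 0).

Definition opmx (m n : nat) := 'I_m -> 'I_n -> Op.

Definition opmx_mul m n p (A : opmx m n) (B : opmx n p) : opmx m p :=
  fun i j y t => \sum_(k < n) A i k (B k j y) t.

Definition op_eq (A B : Op) : Prop := forall y, l2 y -> A y = B y.
Definition opmx_eq m n (A B : opmx m n) : Prop := forall i j, op_eq (A i j) (B i j).

Definition vec n := 'I_n -> rseq.
Definition l2v n (x : vec n) : Prop := forall i, l2 (x i).
Definition opmx_apply m n (A : opmx m n) (x : vec n) : vec m :=
  fun i t => \sum_(j < n) A i j (x j) t.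
Definition sqnorm n (x : vec n) : R :=
  \sum_(i < n) limn (series (fun t => x i t ^+ 2)).

Definition opmx_invertible n (A : opmx n n) : Prop :=
  exists K : vec n -> vec n,
    [/\ forall x, l2v x -> l2v (K x),
        forall x, l2v x -> K (opmx_apply A x) = x,
        forall x, l2v x -> opmx_apply A (K x) = x,
        forall (a b : R) x y, l2v x -> l2v y ->
          K (fun i t => a * x i t + b * y i t) = (fun i t => a * K x i t + b * K y i t)
      & exists C : R, forall x, l2v x -> sqnorm (K x) <= C * sqnorm x].

(* The matrix M, entries given as polynomials c with M_ij = c(q^* ) *)
Definition Mpoly : 'M[{poly R}]_(5, 4) :=
  \matrix_(i < 5, j < 4)
    match nat_of_ord i, nat_of_ord j with
    | 0, 0 => -1
    | 1, 0 => (Num.sqrt 2)^-1 *: 'X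
    | 1, 1 => -1
    | 2, 1 => (Num.sqrt 2)^-1 *: 'X
    | 2, 2 => (Num.sqrt 2)^-1 *: 'X
    | 3, 2 => -1
    | 3, 3 => (Num.sqrt 2)^-1 *: 'X
    | 4, 3 => -1
    | _, _ => 0
    end.

Definition Mop : opmx 5 4 := fun i j => polyqs (Mpoly i j).
Definition Mstar : opmx 4 5 := fun i j => polyq (Mpoly j i).

Definition Pop (s : 'S_4) : opmx 4 4 := fun i j => if s i == j then op1 else op0.
Definition Pstar (s : 'S_4) : opmx 4 4 := fun i j => Pop s j i.

Definition Gram (s : 'S_4) : opmx 4 4 :=
  opmx_mul (opmx_mul (Pstar s) Mstar) (opmx_mul Mop (Pop s)).

Definition Lop (L : 'M[{poly R}]_4) : opmx 4 4 := fun i j => polyq (L i j).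
Definition Lstar (L : 'M[{poly R}]_4) : opmx 4 4 := fun i j => polyqs (L j i).

(* Main.v *)
Require Import Defs.
From mathcomp Require Import all_boot all_order all_algebra all_fingroup.
From mathcomp Require Import all_classical all_reals.
From mathcomp Require Import topology normedtype sequences Rstruct Rstruct_topology.
From mathcomp Require Import zify.
Import Order.TTheory GRing.Theory Num.Theory.
Local Open Scope ring_scope.

Definition single (m : nat) (a : R) : rseq := fun t => if t == m then a else 0.

Lemma l2_single m a : l2 (single m a).
Proof.
rewrite /l2; apply: (is_cvg_near_cst (a ^+ 2)).
exists m.+1 => // n /= hn.
rewrite /series /= big_mkord (bigD1 (Ordinal hn)) //= /single eqxx big1 ?addr0 //.
move=> k; rewrite -val_eqE /= => /negbTE ->; by rewrite expr0n.
Qed.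

Lemma sum_pick n (F : nat -> R) m :
  \sum_(k < n) (if (k : nat) == m then F k else 0) = if (m < n)%N then F m else 0.
Proof.
case: ltnP => hm.
  rewrite (bigD1 (Ordinal hm)) //= eqxx big1 ?addr0 // => k.
  by rewrite -val_eqE /= => /negbTE ->.
apply: big1 => k _; case: eqP => // E.
by move: (ltn_ord k); rewrite E ltnNge hm.
Qed.

Lemma polyq_single p m : polyq p (single m 1) 0 = p`_m.
Proof.
rewrite /polyq /single.
rewrite (eq_bigr (fun k : 'I__ => if (k:nat) == m then p`_k else 0)); last first.
  by move=> k _; rewrite add0n; case: eqP; rewrite ?mulr1 ?mulr0.
rewrite sum_pick; case: ltnP => // h; by rewrite nth_default.
Qed.

Lemma polyqs_e0 r : polyqs r (single 0 1) = fun t => r`_t.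
Proof.
apply: funext => t; rewrite /polyqs /single.
rewrite (eq_bigr (fun k : 'I__ => if (k:nat) == t then r`_k else 0)); last first.
  move=> k _; case: (ltngtP k t) => h.
  - by rewrite subn_eq0 leqNgt h mulr0.
  - by rewrite mulr0.
  - by first [rewrite h subnn eqxx mulr1 | rewrite -h subnn eqxx mulr1].
rewrite sum_pick; case: ltnP => // h; by rewrite nth_default.
Qed.

Lemma polyq_s0 p a t : polyq p (single 0 a) t = if t == 0%N then p`_0 * a else 0.
Proof.
rewrite /polyq /single.
rewrite (eq_bigr (fun k : 'I__ => if nat_of_ord k == 0%N then (if t == 0%N then p`_k * a else 0) else 0)); last first.
  move=> k _; rewrite addn_eq0; case: (nat_of_ord k == 0%N); case: (t == 0%N) => /=; by rewrite ?mulr0.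
rewrite (sum_pick _ (fun k => if t == 0%N then p`_k * a else 0)); case: ltnP => // h.
by rewrite leqn0 size_poly_eq0 in h; rewrite (eqP h) coef0 mul0r if_same.
Qed.

Lemma polyq0 y : polyq 0 y = fun _ => 0.
Proof. by apply: funext => t; rewrite /polyq size_poly0 big_ord0. Qed.
Lemma polyqs0 y : polyqs 0 y = fun _ => 0.
Proof. by apply: funext => t; rewrite /polyqs size_poly0 big_ord0. Qed.
Lemma polyq_z p : polyq p (fun _ => 0) = fun _ => 0.
Proof. by apply: funext => t; rewrite /polyq big1 // => k _; rewrite mulr0. Qed.
Lemma polyqs_z p : polyqs p (fun _ => 0) = fun _ => 0.
Proof. by apply: funext => t; rewrite /polyqs big1 // => k _; rewrite if_same mulr0. Qed.

Lemma GramE (s : 'S_4) i j y : Gram s i j y =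
  fun t => \sum_(k<5) polyq (Mpoly k ((s^-1)%g i)) (polyqs (Mpoly k ((s^-1)%g j)) y) t.
Proof.
apply: funext => t; rewrite /Gram /opmx_mul; apply: eq_bigr => k _.
have -> : (fun t0 => \sum_(k0 < 4) Mop k k0 (Pop s k0 j y) t0) = polyqs (Mpoly k ((s^-1)%g j)) y.
  apply: funext => t0; rewrite (bigD1 ((s^-1)%g j)) //= big1 ?addr0.
    by rewrite /Pop permKV eqxx.
  move=> l hl; rewrite /Pop; case: eqP => [E|_]; last by rewrite /op0 /Mop polyqs_z.
  by move: hl; rewrite -E permK eqxx.
rewrite (bigD1 ((s^-1)%g i)) //= big1 ?addr0.
  by rewrite /Pstar /Pop permKV eqxx.
move=> l hl; rewrite /Pstar /Pop; case: eqP => [E|_] //.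
by move: hl; rewrite -E permK eqxx.
Qed.

Lemma Gram_zero (s : 'S_4) a b :
  (forall k, Mpoly k a = 0 \/ Mpoly k b = 0) -> op_eq (Gram s (s a) (s b)) op0.
Proof.
move=> H y _; rewrite GramE !permK; apply: funext => t; rewrite /op0.
apply: big1 => k _; case: (H k) => ->; by rewrite ?polyq0 ?polyqs0 ?polyq_z.
Qed.

Definition n0 : 'I_4 := @Ordinal 4 0 isT.
Definition n1 : 'I_4 := @Ordinal 4 1 isT.
Definition n2 : 'I_4 := @Ordinal 4 2 isT.
Definition n3 : 'I_4 := @Ordinal 4 3 isT.


Lemma nadj02 k : Mpoly k n0 = 0 \/ Mpoly k n2 = 0. Proof. rewrite /Mpoly !mxE; case: k => [[|[|[|[|[|k]]]]] hk] /=; by [left|right]. Qed.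
Lemma nadj20 k : Mpoly k n2 = 0 \/ Mpoly k n0 = 0. Proof. rewrite /Mpoly !mxE; case: k => [[|[|[|[|[|k]]]]] hk] /=; by [left|right]. Qed.
Lemma nadj03 k : Mpoly k n0 = 0 \/ Mpoly k n3 = 0. Proof. rewrite /Mpoly !mxE; case: k => [[|[|[|[|[|k]]]]] hk] /=; by [left|right]. Qed.
Lemma nadj30 k : Mpoly k n3 = 0 \/ Mpoly k n0 = 0. Proof. rewrite /Mpoly !mxE; case: k => [[|[|[|[|[|k]]]]] hk] /=; by [left|right]. Qed.
Lemma nadj13 k : Mpoly k n1 = 0 \/ Mpoly k n3 = 0. Proof. rewrite /Mpoly !mxE; case: k => [[|[|[|[|[|k]]]]] hk] /=; by [left|right]. Qed.
Lemma nadj31 k : Mpoly k n3 = 0 \/ Mpoly k n1 = 0. Proof. rewrite /Mpoly !mxE; case: k => [[|[|[|[|[|k]]]]] hk] /=; by [left|right]. Qed.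

Definition cc : R := (Num.sqrt 2)^-1.
Lemma cc_neq0 : cc != 0.
Proof. by rewrite /cc invr_eq0 sqrtr_eq0 -ltNge ltr0n. Qed.

Definition Gresp (a b : 'I_4) (n : nat) : R :=
  \sum_(k < 5) polyq (Mpoly k a) (fun t => (Mpoly k b)`_t) n.

Lemma Gram_e0 (s : 'S_4) i j n : Gram s i j (single 0 1) n = Gresp ((s^-1)%g i) ((s^-1)%g j) n.
Proof. by rewrite GramE /Gresp; under eq_bigr => k _ do rewrite polyqs_e0. Qed.

Lemma polyq_m1 y n : polyq (-1) y n = - y n.
Proof. by rewrite /polyq size_polyN size_poly1 big_ord1 addn0 coefN coef1 /= mulN1r. Qed.

Lemma polyq_cX y n : polyq (cc *: 'X) y n = cc * y n.+1.
Proof.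
rewrite /polyq size_scale ?cc_neq0 // size_polyX !big_ord_recl big_ord0 /=.
by rewrite !coefZ !coefX /= mulr0 mul0r add0r addr0 mulr1 addn1.
Qed.

Lemma Mpoly_cases k a : Mpoly k a = -1 \/ Mpoly k a = cc *: 'X \/ Mpoly k a = 0.
Proof. rewrite /Mpoly !mxE; case: k => [[|[|[|[|[|k]]]]] hk]; case: a => [[|[|[|[|a]]]] ha] /=; auto. Qed.

Lemma Mpoly_size k a : (size (Mpoly k a) <= 2)%N.
Proof.
case: (Mpoly_cases k a) => [->|[->|->]].
- by rewrite size_polyN size_poly1.
- by rewrite size_scale ?cc_neq0 // size_polyX.
- by rewrite size_poly0.
Qed.

Lemma Gresp_high a b n : (2 <= n)%N -> Gresp a b n = 0.
Proof.
move=> hn; apply: big1 => k _; apply: big1 => m _.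
rewrite [X in _ * X]nth_default ?mulr0 //; apply: leq_trans (Mpoly_size k b) _.
exact: leq_trans hn (leq_addr _ _).
Qed.

Ltac gcomp := rewrite /Gresp !big_ord_recl big_ord0 /Mpoly !mxE /=;
  rewrite ?polyq0 ?polyq_m1 ?polyq_cX ?coefN ?coef1 ?coefZ ?coefX ?coef0 /=;
  rewrite -/cc ?mulr0 ?mulr1 ?mul0r ?add0r ?addr0 ?mulN1r ?opprK ?oppr0;
  rewrite ?mulr0 ?mul0r ?add0r ?addr0 ?oppr0.

Lemma G10 : Gresp n1 n0 1 = - cc. Proof. by gcomp. Qed.
Lemma G23 : Gresp n2 n3 1 = - cc. Proof. by gcomp. Qed.
Lemma G21 : Gresp n2 n1 0 = cc * cc. Proof. by gcomp. Qed.
Lemma G12 : Gresp n1 n2 0 = cc * cc. Proof. by gcomp. Qed.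
Lemma G20 : Gresp n2 n0 1 = 0. Proof. by gcomp. Qed.
Lemma G13 : Gresp n1 n3 1 = 0. Proof. by gcomp. Qed.
Lemma Gdiag x : Gresp x x 1 = 0.
Proof. case: x => [[|[|[|[|x]]]] hx]; gcomp; by []. Qed.

Definition Cm (L : 'M[{poly R}]_4) (n : nat) : 'M[R]_4 := \matrix_(i, j) (L i j)`_n.

Lemma coef_zero_of_op p : op_eq (polyq p) op0 -> forall m, p`_m = 0.
Proof.
move=> H m; have := H _ (l2_single m 1).
by move/(congr1 (fun f => f 0%N)); rewrite polyq_single.
Qed.

Lemma LLs_e0 L i j n : opmx_mul (Lop L) (Lstar L) i j (single 0 1) n =
  \sum_(l<4) \sum_(k < size (L i l)) (L i l)`_k * (L j l)`_(n+k).
Proof. by rewrite /opmx_mul /Lop /Lstar; under eq_bigr do rewrite polyqs_e0. Qed.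

Lemma widen_coef p N (g : nat -> R) : (size p <= N)%N ->
  \sum_(k < size p) p`_k * g k = \sum_(k < N) p`_k * g k.
Proof.
move=> h; rewrite (big_ord_widen N (fun k => p`_k * g k)) // big_mkcond /=.
apply: eq_bigr => k _; case: ifP => // /negbT; rewrite -leqNgt => h'.
by rewrite nth_default // mul0r.
Qed.

Lemma deg_red (C : nat -> 'M[R]_4) N : (forall n, (N <= n)%N -> C n = 0) ->
  C 0%N \in unitmx ->
  (forall n, (2 <= n)%N -> \sum_(k<N) C k *m (C (n+k)%N)^T = 0) ->
  forall n, (2 <= n)%N -> C n = 0.
Proof.
move=> hN hU hE.
case: N hN hE => [|N'] hN hE; first by move=> n _; apply: hN.
suff H : forall d n, (N'.+1 <= n + d)%N -> (2 <= n)%N -> C n = 0.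
  by move=> n; apply: (H N'.+1 n); rewrite leq_addl.
elim=> [|d IH] n hn h2; first by apply: hN; rewrite addn0 in hn.
have := hE n h2.
rewrite big_ord_recl /= addn0 big1 ?addr0.
  move/(congr1 (mulmx (invmx (C 0%N)))); rewrite mulKmx // mulmx0.
  by move/(congr1 trmx); rewrite trmxK trmx0.
move=> k _; rewrite (IH (n + bump 0 k)%N) ?trmx0 ?mulmx0 //.
  rewrite /bump /=; lia.
rewrite /bump /=; lia.
Qed.

Lemma sum4 (F : 'I_4 -> R) : \sum_(w < 4) F w = F n0 + F n1 + F n2 + F n3.
Proof.
rewrite !big_ord_recl big_ord0 addr0 !addrA.
by congr (_ + _ + _ + _); congr F; apply: val_inj.
Qed.

Theorem theorem3 (s : 'S_4) :
  ~ exists L : 'M[{poly R}]_4,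
      [/\ opmx_invertible (Lop L),
          opmx_eq (opmx_mul (Lop L) (Lstar L)) (Gram s),
          (forall i j : 'I_4, (i < j)%N -> op_eq (Lop L i j) op0)
        & (forall i j : 'I_4, op_eq (Gram s i j) op0 -> op_eq (Lop L i j) op0)].
Proof.
move=> [L [HI H2 H3 H4]].
have Htri : forall n (i j : 'I_4), (i < j)%N -> (L i j)`_n = 0.
  by move=> n i j h; exact: coef_zero_of_op (H3 i j h) n.
have Hsp : forall a b, (forall k, Mpoly k a = 0 \/ Mpoly k b = 0) ->
    forall n, (L (s a) (s b))`_n = 0.
  by move=> a b hab n; apply: coef_zero_of_op; apply: H4; exact: Gram_zero.
pose M := \max_(p : 'I_4 * 'I_4) size (L p.1 p.2).
pose N := M.+2.
have hsz : forall i j, (size (L i j) <= N)%N.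
  move=> i j; have := @leq_bigmax _ (fun p : 'I_4 * 'I_4 => size (L p.1 p.2)) (i, j).
  rewrite /N /M /=; lia.
have E : forall i j n, \sum_(k<N) \sum_(l<4) (L i l)`_k * (L j l)`_(n+k) =
    Gresp ((s^-1)%g i) ((s^-1)%g j) n.
  move=> i j n; rewrite -Gram_e0 -(H2 i j (single 0 1) (l2_single 0 1)) LLs_e0.
  rewrite exchange_big /=; apply: eq_bigr => l _.
  by have := widen_coef (L i l) N (fun k => (L j l)`_(n+k)) (hsz i l) => /= ->.
have hdet : \det (Cm L 0%N) != 0.
  apply/negP => /eqP hd.
  have : \det (Cm L 0%N)^T == 0 by rewrite det_tr hd.
  case/det0P => v hv0 hv.
  case: HI => K [_ HK _ _ _].
  pose x : vec 4 := fun j => single 0 (v ord0 j).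
  pose x0 : vec 4 := fun j => single 0 0.
  have Ax : opmx_apply (Lop L) x = opmx_apply (Lop L) x0.
    apply: funext => i; apply: funext => t; rewrite /opmx_apply /Lop /x /x0.
    under eq_bigr do rewrite polyq_s0.
    under [RHS]eq_bigr do rewrite polyq_s0.
    case: (t == 0%N); last by [].
    rewrite [RHS]big1 => [|j _]; last by rewrite mulr0.
    move/matrixP: hv => /(_ ord0 i); rewrite !mxE => hv.
    rewrite -[RHS]hv; apply: eq_bigr => j _; by rewrite mulrC /Cm !mxE.
  have hx := HK x (fun j => l2_single 0 _).
  have := HK x0 (fun j => l2_single 0 _).
  rewrite -Ax hx => hx0.
  move/negP: hv0; apply; apply/eqP/rowP => j.
  have := congr1 (fun f => f j 0%N) hx0; rewrite /x /x0 /single /= !mxE => <-.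
  by [].
have hU : Cm L 0%N \in unitmx by rewrite unitmxE unitfE.
have htrig : is_trig_mx (Cm L 0%N).
  by apply/is_trig_mxP => i j h; rewrite /Cm mxE; exact: Htri.
have hd0 : (L ord0 ord0)`_0 != 0.
  move: hdet; rewrite det_trig // (bigD1 ord0) //= mulf_eq0 negb_or => /andP[].
  by rewrite /Cm mxE.
have hc : forall n i j, (2 <= n)%N -> (L i j)`_n = 0.
  move=> n i j hn.
  have HH : Cm L n = 0.
    apply: (@deg_red (Cm L) N _ hU _ n hn).
  - move=> m hm; apply/matrixP => i' j'; rewrite !mxE nth_default //.
    exact: leq_trans (hsz i' j') hm.
  - move=> m hm; apply/matrixP => i' j'; rewrite summxE [RHS]mxE.
    rewrite -[RHS](@Gresp_high ((s^-1)%g i') ((s^-1)%g j') m hm) -E.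
    apply: eq_bigr => k _; rewrite mxE; apply: eq_bigr => l _.
    by rewrite /Cm !mxE.
  by move/matrixP: HH => /(_ i j); rewrite /Cm !mxE.
have E0 : forall i j, \sum_l (L i l)`_0 * (L j l)`_0 + \sum_l (L i l)`_1 * (L j l)`_1
    = Gresp ((s^-1)%g i) ((s^-1)%g j) 0.
  move=> i j; rewrite -E /N (big_ord_recl M.+1) (big_ord_recl M) /=.
  rewrite [X in _ + (_ + X)]big1 ?addr0 // => k _.
  by apply: big1 => l _; rewrite hc ?mul0r.
have E1 : forall i j, \sum_l (L i l)`_0 * (L j l)`_1 = Gresp ((s^-1)%g i) ((s^-1)%g j) 1.
  move=> i j; rewrite -E /N (big_ord_recl M.+1) (big_ord_recl M) /=.
  rewrite [X in _ + (_ + X)]big1 ?addr0.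
    rewrite [X in _ + X]big1 ?addr0 // => l _.
    by rewrite [X in _ * X]hc ?mulr0.
  by move=> k _; apply: big1 => l _; rewrite hc ?mul0r.
have R0 : forall i a b, \sum_l (L i l)`_a * (L ord0 l)`_b = (L i ord0)`_a * (L ord0 ord0)`_b.
  by move=> i a b; rewrite big_ord_recl big1 ?addr0 // => l _; rewrite [X in _ * X]Htri ?mulr0.
have R0' : forall j a b, \sum_l (L ord0 l)`_a * (L j l)`_b = (L ord0 ord0)`_a * (L j ord0)`_b.
  by move=> j a b; rewrite big_ord_recl big1 ?addr0 // => l _; rewrite Htri ?mul0r.
have hm00 : (L ord0 ord0)`_1 = 0.
  have := E1 ord0 ord0; rewrite R0 Gdiag => /eqP; rewrite mulf_eq0 (negbTE hd0) /=.
  by move/eqP.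
have ncc : - cc != 0 by rewrite oppr_eq0 cc_neq0.
have ncc2 : cc * cc != 0 by rewrite mulf_neq0 // cc_neq0.
have [w [hinv hs]] : exists w, (s^-1)%g ord0 = w /\ s w = ord0.
  by exists ((s^-1)%g ord0); rewrite permKV.
have hw : w = n0 \/ w = n1 \/ w = n2 \/ w = n3.
  case: w {hinv hs} => [[|[|[|[|m]]]] hm]; last by [].
  - by left; apply: val_inj.
  - by right; left; apply: val_inj.
  - by right; right; left; apply: val_inj.
  - by right; right; right; apply: val_inj.
case: hw hinv hs => [->|[->|[->|->]]] hinv hs.
- have := E1 (s n1) ord0; rewrite R0 hm00 mulr0 permK hinv G10 => h.
  by move: ncc; rewrite -h eqxx.
- have ha : (L (s n2) ord0)`_0 != 0.
    have := E0 (s n2) ord0; rewrite R0 R0 hm00 mulr0 addr0 permK hinv G21 => h.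
    by apply/eqP => h0; move: ncc2; rewrite -h h0 mul0r eqxx.
  have he : (L (s n0) ord0)`_1 != 0.
    have := E1 ord0 (s n0); rewrite R0' permK hinv G10 => h.
    by apply/eqP => h0; move: ncc; rewrite -h h0 mulr0 eqxx.
  have := E1 (s n2) (s n0); rewrite !permK G20 (reindex_inj (@perm_inj _ s)) sum4 /=.
  rewrite hs (Hsp n2 n0 (@nadj20) 0) (Hsp n0 n2 (@nadj02) 1) (Hsp n0 n3 (@nadj03) 1).
  rewrite !mul0r !mulr0 !add0r !addr0 => /eqP; by rewrite mulf_eq0 (negbTE ha) (negbTE he).
- have ha : (L (s n1) ord0)`_0 != 0.
    have := E0 (s n1) ord0; rewrite R0 R0 hm00 mulr0 addr0 permK hinv G12 => h.
    by apply/eqP => h0; move: ncc2; rewrite -h h0 mul0r eqxx.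
  have he : (L (s n3) ord0)`_1 != 0.
    have := E1 ord0 (s n3); rewrite R0' permK hinv G23 => h.
    by apply/eqP => h0; move: ncc; rewrite -h h0 mulr0 eqxx.
  have := E1 (s n1) (s n3); rewrite !permK G13 (reindex_inj (@perm_inj _ s)) sum4 /=.
  rewrite hs (Hsp n3 n0 (@nadj30) 1) (Hsp n3 n1 (@nadj31) 1) (Hsp n1 n3 (@nadj13) 0).
  rewrite !mul0r !mulr0 !add0r !addr0 => /eqP; by rewrite mulf_eq0 (negbTE ha) (negbTE he).
- have := E1 (s n2) ord0; rewrite R0 hm00 mulr0 permK hinv G23 => h.
  by move: ncc; rewrite -h eqxx.
Qed.
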